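(* Let $\mathbb{X}$ be a smooth real Banach space and $\mathbb{Y}$ a strictly convex and smooth real Banach space. Let $T\in\mathbb{L}(\mathbb{X},\mathbb{Y})$ with $\operatorname{rank}T=1$ and $\|T\|=1$. If $(x,Tx)$ is not a weak CPP for some $x\in M_T$, then $T$ is an extreme contraction.
   Context: All Banach spaces are real and of dimension greater than $1$. $M_T=\{x\in S_{\mathbb{X}}:\|Tx\|=\|T\|\}$. A norm one $T\in\mathbb{L}(\mathbb{X},\mathbb{Y})$ is an extreme contraction if it is an extreme point of the closed unit ball of $\mathbb{L}(\mathbb{X},\mathbb{Y})$. $B(x,r)=\{u:\|u-x\|<r\}$. $x\perp_B y$ means $\|x+\lambda y\|\ge\|x\|$ for all real $\lambda$; $x^\perp=\{y:x\perp_By\}$. For $x\in S_{\mathbb{X}}$, $y\in S_{\mathbb{Y}}$, $(x,y)$ is a weak CPP if there exist $z\in x^\perp\cap S_{\mathbb{X}}$, $w\in y^\perp\cap S_{\mathbb{Y}}$, $r>0$, $\mu>0$ such that for all $a,b\in\mathbb{R}$, $ax+bz\in B(x,r)\cap S_{\mathbb{X}}$ implies $\|ay+b\mu w\|\le1$. *)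

(* Defs.v *)
From HB Require Import structures.
From mathcomp Require Import all_boot all_order all_algebra.
From mathcomp Require Import all_classical all_reals all_analysis.
Set Implicit Arguments. Unset Strict Implicit. Unset Printing Implicit Defensive.
Import Order.TTheory GRing.Theory Num.Theory.
Import numFieldNormedType.Exports.
Local Open Scope classical_set_scope.
Local Open Scope ring_scope.

Section BanachDefs.
Variable R : realType.

Definition opnorm (X Y : normedModType R) (f : X -> Y) : R :=
  sup [set `|f x| | x in [set x : X | `|x| <= 1]].

Definition dim_gt1 (X : normedModType R) : Prop :=
  exists u v : X, forall a b : R, a *: u + b *: v = 0 -> a = 0 /\ b = 0.

Definition smooth (X : normedModType R) : Prop :=
  forall x : X, `|x| = 1 ->
  forall f g : {linear X -> R^o}, continuous f -> continuous g ->
    opnorm f = 1 -> opnorm g = 1 -> f x = 1 -> g x = 1 ->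
    forall z, f z = g z.

Definition strictly_convex (X : normedModType R) : Prop :=
  forall x y : X, `|x| = 1 -> `|y| = 1 -> x <> y ->
  forall t : R, 0 < t < 1 -> `|t *: x + (1 - t) *: y| < 1.

Definition rank1 (X Y : normedModType R) (T : X -> Y) : Prop :=
  exists y0 : Y, y0 <> 0 /\ range T = [set a *: y0 | a in [set: R]].

Definition M_T (X Y : normedModType R) (T : X -> Y) : set X :=
  [set x | `|x| = 1 /\ `|T x| = opnorm T].

Definition BJorth (X : normedModType R) (x y : X) : Prop :=
  forall l : R, `|x| <= `|x + l *: y|.

Definition oball (X : normedModType R) (x : X) (r : R) : set X :=
  [set u | `|u - x| < r].

Definition weakCPP (X Y : normedModType R) (x : X) (y : Y) : Prop :=
  exists (z : X) (w : Y) (r mu : R),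
    [/\ BJorth x z, `|z| = 1, BJorth y w & `|w| = 1] /\ 0 < r /\ 0 < mu /\
    forall a b : R,
      oball x r (a *: x + b *: z) -> `|a *: x + b *: z| = 1 ->
      `|a *: y + b *: (mu *: w)| <= 1.

Definition extreme_contraction (X Y : normedModType R) (T : {linear X -> Y}) :
  Prop :=
  opnorm T = 1 /\
  forall (T1 T2 : {linear X -> Y}) (t : R),
    continuous T1 -> continuous T2 -> opnorm T1 <= 1 -> opnorm T2 <= 1 ->
    0 < t < 1 -> (forall x, T x = t *: T1 x + (1 - t) *: T2 x) ->
    (forall x, T1 x = T x) /\ (forall x, T2 x = T x).

End BanachDefs.

(* Main.v *)
Require Import Defs.
From HB Require Import structures.
From mathcomp Require Import all_boot all_order all_algebra.
From mathcomp Require Import all_classical all_reals all_analysis.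
From mathcomp Require Import ring lra.
Import Order.TTheory GRing.Theory Num.Theory.
Import numFieldNormedType.Exports.
Local Open Scope classical_set_scope.
Local Open Scope ring_scope.

Section HBsec.
Variables (R : realType) (V : lmodType R).

Definition sublin (q : V -> R) :=
  (forall x y, q (x + y) <= q x + q y) /\
  (forall (l : R) x, 0 <= l -> q (l *: x) = l * q x).

Lemma sublin0 (q : V -> R) : sublin q -> q 0 = 0.
Proof. by move=> [_ H]; rewrite -(scale0r (0:V)) H // mul0r. Qed.

Lemma sublin_lb (q : V -> R) x : sublin q -> - q (- x) <= q x.
Proof.
move=> sq; have := (sq.1 x (-x)); rewrite subrr sublin0 //.
move=> H; lra.
Qed.

Definition qsh (q : V -> R) (y : V) (x : V) : R :=
  inf [set q (x + t *: y) - t * q y | t in [set t : R | 0 <= t]].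

Lemma qsh_lb (q : V -> R) (y x : V) : sublin q ->
  lbound [set q (x + t *: y) - t * q y | t in [set t : R | 0 <= t]] (- q (- x)).
Proof.
move=> sq _ [t t0 <-].
have := sq.1 (x + t *: y) (- x); rewrite addrC addKr sq.2 //.
move=> H; lra.
Qed.

Lemma qsh_ne (q : V -> R) (y x : V) :
  [set q (x + t *: y) - t * q y | t in [set t : R | 0 <= t]] !=set0.
Proof. exists (q (x + 0 *: y) - 0 * q y). exists 0 => //=. Qed.

Lemma qsh_le (q : V -> R) (y x : V) t : sublin q -> 0 <= t -> qsh q y x <= q (x + t *: y) - t * q y.
Proof.
move=> sq t0; apply: ge_inf; first by exists (- q (- x)); exact: qsh_lb.
by exists t.
Qed.

Lemma qsh_ge (q : V -> R) (y x : V) c : (forall t, 0 <= t -> c <= q (x + t *: y) - t * q y) -> c <= qsh q y x.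
Proof. move=> H; apply: lb_le_inf; first exact: qsh_ne. by move=> _ [t t0 <-]; exact: H. Qed.

Lemma qsh_leq (q : V -> R) (y x : V) : sublin q -> qsh q y x <= q x.
Proof. move=> sq; have := qsh_le q y x 0 sq (lexx 0); by rewrite scale0r addr0 mul0r subr0. Qed.

Lemma qsh_sublin (q : V -> R) (y : V) : sublin q -> sublin (qsh q y).
Proof.
move=> sq; split.
- move=> x1 x2.
  suff H : forall t1, 0 <= t1 -> forall t2, 0 <= t2 ->
    qsh q y (x1 + x2) <= (q (x1 + t1 *: y) - t1 * q y) + (q (x2 + t2 *: y) - t2 * q y).
    have H2 : forall t1, 0 <= t1 -> qsh q y (x1 + x2) - (q (x1 + t1 *: y) - t1 * q y) <= qsh q y x2.
      move=> t1 t1p; apply: qsh_ge => t2 t2p; have := H t1 t1p t2 t2p; lra.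
    have H3 : qsh q y (x1 + x2) - qsh q y x2 <= qsh q y x1.
      apply: qsh_ge => t1 t1p; have := H2 t1 t1p; lra.
    lra.
  move=> t1 t1p t2 t2p; apply: le_trans (qsh_le q y _ _ sq (addr_ge0 t1p t2p)) _.
  have := sq.1 (x1 + t1 *: y) (x2 + t2 *: y).
  have -> : x1 + t1 *: y + (x2 + t2 *: y) = x1 + x2 + (t1 + t2) *: y.
    by rewrite scalerDl addrACA.
  move=> H; rewrite mulrDl; lra.
- move=> l x l0; have [->|lpos] := eqVneq l 0.
    rewrite scale0r mul0r; apply/eqP; rewrite eq_le; apply/andP; split.
      by have := qsh_leq q y 0 sq; rewrite (sublin0 q sq).
    apply: qsh_ge => t t0; rewrite add0r sq.2 // subrr //.
  have lp : 0 < l by rewrite lt_def lpos l0.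
  apply/eqP; rewrite eq_le; apply/andP; split.
    rewrite -ler_pdivrMl //; apply: qsh_ge => t t0.
    rewrite ler_pdivrMl //.
    apply: le_trans (qsh_le q y _ _ sq (mulr_ge0 l0 t0)) _.
    by rewrite -scalerA -scalerDr (sq.2 _ _ l0) mulrBr mulrA.
  apply: qsh_ge => t t0.
  have tl : 0 <= t / l by rewrite divr_ge0.
  apply: le_trans (ler_wpM2l l0 (qsh_le q y x (t / l) sq tl)) _.
  have e : l * (t / l) = t by field.
  by rewrite mulrBr -(sq.2 _ _ l0) scalerDr scalerA e mulrA e.
Qed.

Section Zsec.
Variable p : V -> R.
Hypothesis sp : sublin p.
Definition Tq := {q : V -> R | sublin q /\ forall x, q x <= p x}.
Definition Rl (s t : Tq) : bool := `[< forall x, sval t x <= sval s x >].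

Lemma chain_lb (A : set Tq) : total_on A Rl -> exists t, forall s, A s -> Rl s t.
Proof.
move=> tot.
have [[q0 Aq0]|nA] := pselect (exists q, A q); last first.
  exists (exist _ p (conj sp (fun x => lexx (p x)))) => s As.
  by exfalso; apply: nA; exists s.
pose m x := inf [set sval q x | q in A].
have lbm x : lbound [set sval q x | q in A] (- p (- x)).
  move=> _ [q Aq <-]; have [sq qp] := svalP q.
  have := sublin_lb (sval q) x sq; have := qp (- x); lra.
have mle x q : A q -> m x <= sval q x.
  move=> Aq; apply: ge_inf; first by exists (- p (- x)).
  by exists q.
have mge x c : (forall q, A q -> c <= sval q x) -> c <= m x.
  move=> H; apply: lb_le_inf; first by exists (sval q0 x), q0.
  by move=> _ [q Aq <-]; exact: H.
have msub : sublin m.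
  split.
  - move=> x y.
    have H : forall q1 q2, A q1 -> A q2 -> m (x + y) <= sval q1 x + sval q2 y.
      move=> q1 q2 A1 A2; have [s1 _] := svalP q1; have [s2 _] := svalP q2.
      have [/asboolP H|/asboolP H] := tot q1 q2 A1 A2.
      + apply: le_trans (mle _ _ A2) _; apply: le_trans (s2.1 x y) _.
        have := H x; lra.
      + apply: le_trans (mle _ _ A1) _; apply: le_trans (s1.1 x y) _.
        have := H y; lra.
    have H2 : forall q1, A q1 -> m (x + y) - sval q1 x <= m y.
      move=> q1 A1; apply: mge => q2 A2; have := H q1 q2 A1 A2; lra.
    have H3 : m (x + y) - m y <= m x.
      apply: mge => q1 A1; have := H2 q1 A1; lra.
    lra.
  - move=> l x l0; have [->|lpos] := eqVneq l 0.
      rewrite scale0r mul0r; apply/eqP; rewrite eq_le; apply/andP; split.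
        apply: le_trans (mle _ _ Aq0) _; have [sq _] := svalP q0.
        by rewrite (sublin0 _ sq).
      apply: mge => q Aq; have [sq _] := svalP q; by rewrite (sublin0 _ sq).
    have lp : 0 < l by rewrite lt_def lpos l0.
    apply/eqP; rewrite eq_le; apply/andP; split.
      rewrite -ler_pdivrMl //; apply: mge => q Aq.
      rewrite ler_pdivrMl //; have [sq _] := svalP q.
      by rewrite -(sq.2 _ _ l0); apply: mle.
    apply: mge => q Aq; have [sq _] := svalP q.
    by rewrite (sq.2 _ _ l0); apply: ler_wpM2l => //; apply: mle.
have mp x : m x <= p x.
  apply: le_trans (mle _ _ Aq0) _; have [_ qp] := svalP q0; exact: qp.
exists (exist _ m (conj msub mp)) => s As; apply/asboolP => x /=; exact: mle.
Qed.

Lemma hb_exists : exists g : V -> R,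
  (forall a x y, g (a *: x + y) = a * g x + g y) /\ forall x, g x <= p x.
Proof.
have [|||t tmax] := @ZL_preorder Tq (exist _ p (conj sp (fun x => lexx (p x)))) Rl.
- by move=> s; apply/asboolP => x.
- move=> r s t /asboolP H1 /asboolP H2; apply/asboolP => x.
  exact: le_trans (H2 x) (H1 x).
- exact: chain_lb.
have [st tp] := svalP t.
pose g := sval t.
have sup x y : g x + g y <= g (x + y).
  pose sy := exist (fun q => sublin q /\ forall x, q x <= p x) (qsh g y)
     (conj (qsh_sublin g y st) (fun x => le_trans (qsh_leq g y x st) (tp x))).
  have /tmax /asboolP H : Rl t sy by apply/asboolP => z /=; exact: qsh_leq.
  have := H x; have := qsh_le g y x 1 st ler01; rewrite scale1r mul1r /=.
  move=> h1 h2; rewrite /= /g in h1 h2 *; lra.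
have add x y : g (x + y) = g x + g y.
  by apply/eqP; rewrite eq_le st.1 sup.
have g0 : g 0 = 0 := sublin0 g st.
have gN x : g (- x) = - g x.
  have := add x (- x); rewrite subrr g0 => h; lra.
have hom a x : g (a *: x) = a * g x.
  have [a0|a0] := leP 0 a; first by rewrite /g st.2.
  have : g ((- a) *: x) = (- a) * g x by rewrite /g st.2 // oppr_ge0 ltW.
  by rewrite scaleNr gN => h; rewrite -[g (a *: x)]opprK h mulNr opprK.
exists g; split; last exact: tp.
by move=> a x y; rewrite add hom.
Qed.
End Zsec.
End HBsec.

Set Implicit Arguments.
Section Ops.
Variable R : realType.

Lemma lin_bnd (X Y : normedModType R) (h : {linear X -> Y}) :
  continuous h -> exists M, forall x, `|x| <= 1 -> `|h x| <= M.
Proof.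
move=> hc; have /bounded_funP H := (proj2 (linear_bounded_continuous h) hc).
exact: H.
Qed.

Lemma op_ge (X Y : normedModType R) (h : {linear X -> Y}) x :
  continuous h -> `|x| <= 1 -> `|h x| <= opnorm h.
Proof.
move=> hc x1; have [M HM] := lin_bnd h hc.
apply: ub_le_sup; last by exists x.
by exists M => _ [y y1 <-]; exact: HM.
Qed.

Lemma op_le (X Y : normedModType R) (h : X -> Y) c :
  (forall x, `|x| <= 1 -> `|h x| <= c) -> opnorm h <= c.
Proof.
move=> H; apply: ge_sup.
  by exists `|h 0|, 0 => //=; rewrite normr0.
by move=> _ [y y1 <-]; exact: H.
Qed.

Lemma op_bound (X Y : normedModType R) (h : {linear X -> Y}) x :
  continuous h -> `|h x| <= opnorm h * `|x|.
Proof.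
move=> hc; have [->|x0] := eqVneq x 0.
  by rewrite linear0 !normr0 mulr0.
have nx : 0 < `|x| by rewrite normr_gt0.
have e : x = `|x| *: (`|x|^-1 *: x) by rewrite scalerA mulfV ?scale1r // gt_eqF.
rewrite {1}e linearZ /= normrZ (ger0_norm (ltW nx)) mulrC ler_pM2r //.
apply: op_ge => //; rewrite normrZ ger0_norm ?invr_ge0 ?(ltW nx) // mulVf ?gt_eqF //.
Qed.

Definition mklin (V : lmodType R) (f : V -> R)
  (H : forall a x y, f (a *: x + y) = a * f x + f y) : {linear V -> R^o} :=
  HB.pack_for {linear V -> R^o} f (GRing.isLinear.Build R V R^o *:%R f H).

Lemma norming (Y : normedModType R) (y0 : Y) : `|y0| = 1 ->
  exists g : {linear Y -> R^o},
    [/\ continuous g, (forall y, `|g y| <= `|y|) & g y0 = 1].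
Proof.
move=> ny0.
have sn : @sublin R Y (fun y : Y => `|y|).
  split; first by move=> x y; exact: ler_normD.
  by move=> l x l0; rewrite normrZ ger0_norm.
have [g [gl gp]] := @hb_exists R Y _ (@qsh_sublin R Y _ y0 sn).
have gle y : g y <= `|y| := le_trans (gp y) (@qsh_leq R Y _ y0 y sn).
have g0 : g 0 = 0.
  have := gl 1 0 0; rewrite scale1r addr0 mul1r => h; lra.
have gN y : g (- y) = - g y.
  by have := gl (-1) y 0; rewrite addr0 scaleN1r g0 addr0 mulN1r.
have gb y : `|g y| <= `|y|.
  rewrite ler_norml gle andbT; have := gle (- y); rewrite gN normrN => h; lra.
have gy : g y0 = 1.
  have h1 := gle y0; have h2 := gp (- y0).
  have := @qsh_le R Y _ y0 (- y0) 1 sn ler01; rewrite scale1r addNr normr0 mul1r ny0.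
  rewrite gN in h2; move=> h3; rewrite ny0 in h1; lra.
pose G := @mklin Y g gl.
exists G; split => //.
apply/linear_bounded_continuous/bounded_funP => r; exists r => x xr.
exact: le_trans (gb x) xr.
Qed.
End Ops.
Unset Implicit Arguments.

Theorem mainTheorem4 (R : realType) (X Y : completeNormedModType R)
  (dimX : dim_gt1 X) (dimY : dim_gt1 Y)
  (smX : smooth X) (smY : smooth Y) (scY : strictly_convex Y)
  (T : {linear X -> Y}) (Tcont : continuous T)
  (Trank : rank1 T) (Tnorm : opnorm T = 1) :
  (exists x : X, M_T T x /\ ~ weakCPP x (T x)) ->
  extreme_contraction T.
Proof.
move=> [x0 [[nx0 nTx0] nCPP]].
move Ey0 : (T x0) => y0; rewrite Ey0 in nCPP nTx0.
have ny0 : `|y0| = 1 by rewrite nTx0 Tnorm.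
have [g [gc gb gy0]] := norming _ _ ny0.
have Tle x : `|T x| <= `|x|.
  by have := op_bound _ x Tcont; rewrite Tnorm mul1r.
have Tf x : T x = g (T x) *: y0.
  have [y1 [y1n0 rng]] := Trank.
  have : [set a *: y1 | a in [set: R]] (T x) by rewrite -rng; exists x.
  move=> [a _ ea].
  have : [set a *: y1 | a in [set: R]] y0 by rewrite -rng -Ey0; exists x0.
  move=> [a0 _ ea0].
  have a0n : a0 != 0.
    apply/eqP => a00; move: ny0; rewrite -ea0 a00 scale0r normr0 => h.
    by move/eqP: h; rewrite eq_sym oner_eq0.
  have e1 : T x = (a / a0) *: y0 by rewrite -ea0 scalerA divfK.
  by rewrite e1 linearZ /= gy0; congr (_ *: _); rewrite /GRing.scale /=; ring.
pose f := @mklin R X (fun x => g (T x))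
  (fun a x y => etrans (congr1 g (linearP T a x y)) (linearP g a (T x) (T y))).
have fc : continuous f.
  by move=> x; apply: (continuous_comp (Tcont x) (gc (T x))).
have fle x : `|f x| <= `|x| := le_trans (gb (T x)) (Tle x).
have fx0 : f x0 = 1 by rewrite /= Ey0.
have nf : opnorm f = 1.
  apply/le_anti/andP; split.
    by apply: op_le => x x1; exact: le_trans (fle x) x1.
  by rewrite -{1}(normr1 R) -fx0; apply: op_ge => //; rewrite nx0.
split => //.
suff key : forall (A B : {linear X -> Y}) (s : R), continuous A -> continuous B ->
    opnorm A <= 1 -> opnorm B <= 1 -> 0 < s < 1 ->
    (forall x, T x = s *: A x + (1 - s) *: B x) -> forall x, A x = T x.
  move=> T1 T2 t c1 c2 n1 n2 tb Tdec; split.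
    exact: (key T1 T2 t).
  apply: (key T2 T1 (1 - t)) => //.
    by move: tb => /andP [h1 h2]; apply/andP; split; lra.
  by move=> x; rewrite Tdec addrC; congr (_ + _); congr (_ *: _); ring.
move=> A B s cA cB nA nB sb dec.
have Ale x : `|A x| <= `|x|.
  apply: le_trans (op_bound _ x cA) _; rewrite -{2}(mul1r `|x|).
  by apply: ler_wpM2r.
have Ble x : `|B x| <= `|x|.
  apply: le_trans (op_bound _ x cB) _; rewrite -{2}(mul1r `|x|).
  by apply: ler_wpM2r.
move: sb => /andP [s0 s1].
have Ax0 : A x0 = y0.
  have hA := Ale x0; have hB := Ble x0; rewrite nx0 in hA hB.
  have [eAB|nAB] := eqVneq (A x0) (B x0).
    by rewrite -Ey0 dec -eAB -scalerDl addrC subrK scale1r.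
  exfalso.
  have hy : `|y0| <= s * `|A x0| + (1 - s) * `|B x0|.
    rewrite -Ey0 dec; apply: le_trans (ler_normD _ _) _.
    by rewrite !normrZ !ger0_norm //; [lra | lra].
  have [a1|a1] := eqVneq `|A x0| 1; last first.
    have : `|A x0| < 1 by rewrite lt_neqAle a1 hA.
    move=> h; rewrite ny0 in hy; nra.
  have [b1|b1] := eqVneq `|B x0| 1; last first.
    have : `|B x0| < 1 by rewrite lt_neqAle b1 hB.
    move=> h; rewrite ny0 in hy; nra.
  have nAB2 : A x0 <> B x0 by apply/eqP.
  have := scY _ _ a1 b1 nAB2 s; rewrite s0 s1 => /(_ isT).
  by rewrite -dec Ey0 ny0 ltxx.
pose h := @mklin R X (fun x => g (A x))
  (fun a x y => etrans (congr1 g (linearP A a x y)) (linearP g a (A x) (A y))).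
have hc : continuous h.
  by move=> x; apply: (continuous_comp (cA x) (gc (A x))).
have hle x : `|h x| <= `|x| := le_trans (gb (A x)) (Ale x).
have hx0 : h x0 = 1 by rewrite /= Ax0.
have nh : opnorm h = 1.
  apply/le_anti/andP; split.
    by apply: op_le => x x1; exact: le_trans (hle x) x1.
  by rewrite -{1}(normr1 R) -hx0; apply: op_ge => //; rewrite nx0.
have ghf := smX x0 nx0 h f hc fc nh nf hx0 fx0.
move=> u; apply: contrapT => nAu; apply: nCPP.
have gAT z : g (A z) = g (T z) by exact: (ghf z).
have Tx0 : T x0 = y0 := Ey0.
pose fu := g (T u).
pose z' := u - fu *: x0.
have gTz' : g (T z') = 0.
  by rewrite /z' linearB linearZ /= Tx0 linearB linearZ /= gy0 /GRing.scale /= mulr1 subrr.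
have Tz' : T z' = 0 by rewrite Tf gTz' scale0r.
have Az' : A z' = A u - T u.
  by rewrite /z' linearB linearZ /= Ax0 [in RHS]Tf.
have Az'n0 : A z' != 0.
  by rewrite Az' subr_eq0; apply/eqP.
have z'n0 : z' != 0.
  by apply: contraNneq Az'n0 => ->; rewrite linear0.
have nz : 0 < `|z'| by rewrite normr_gt0.
pose z := `|z'|^-1 *: z'.
have nzz : `|z| = 1.
  by rewrite normrZ ger0_norm ?invr_ge0 ?(ltW nz) // mulVf ?gt_eqF.
have gTz : g (T z) = 0.
  rewrite /z linearZ /=.
  by rewrite Tz' scaler0 linear0.
have Tz : T z = 0 by rewrite Tf gTz scale0r.
pose v := A z.
have vn0 : v != 0.
  by rewrite /v /z linearZ /= scaler_eq0 negb_or invr_eq0 gt_eqF.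
have nv : 0 < `|v| by rewrite normr_gt0.
have gv : g v = 0 by rewrite /v gAT gTz.
pose w := `|v|^-1 *: v.
have gnorm y : g y <= `|y| := le_trans (ler_norm _) (gb y).
exists z, w, 1, `|v|; split; first split.
- move=> l; rewrite nx0; have := fle (x0 + l *: z).
  rewrite /= linearD linearZ /= Tx0 Tz.
  by rewrite scaler0 addr0 gy0 normr1.
- exact: nzz.
- move=> l; rewrite ny0; apply: le_trans (gnorm _).
  by rewrite linearD linearZ /= gy0 /w linearZ /= gv /GRing.scale /= !mulr0 addr0.
- by rewrite normrZ ger0_norm ?invr_ge0 ?(ltW nv) // mulVf ?gt_eqF.
split => //; split => // a b _ nab.
have e : `|v| *: w = v by rewrite /w scalerA mulfV ?gt_eqF ?scale1r.
rewrite e.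
have eA : A (a *: x0 + b *: z) = a *: y0 + b *: v.
  rewrite /v /z linearD !linearZ /= Ax0.
  by rewrite !scalerA mulrC.
by rewrite -eA -nab; exact: Ale.
Qed.
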